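(* Let $m\ge3$, $X=\{0,1,\dots,m-1\}$, $a_m=(0\,1\,\cdots\,m{-}1)$ and $a_2=(0\,1)$. Let $G=\langle A\cup B\rangle$ be a CS group with rooted group $A=\mathrm{Sym}(X)$ acting naturally, and suppose $B$ has a generating set $S$ such that, among the family of sections $(b|_x)_{b\in S,\,x\in\dot X}$, exactly one entry equals $a_m$, exactly two entries equal $a_2$, and all other entries are trivial. Then $G$ is not periodic.
   Context: $X^*$ is the free monoid on $X$ viewed as a rooted tree with distinguished letter $0$, $\dot X=X\setminus\{0\}$; $\mathrm{Aut}(X^* )$ acts on the right; sections are defined by $(u\star v).g=u.g\star v.(g|_u)$; permutations of $X$ are rooted automorphisms; $\mathrm{St}(1)$ is the first layer stabiliser. A CS group is $\langle A\cup B\rangle$ with $A\le\mathrm{Sym}(X)$ transitive and $B\le\mathrm{St}(1)$ such that $b|_0=b$ for all $b\in B$ and the elements $b|_x$ ($b\in B$, $x\in\dot X$) lie in $A$ and generate $A$. Periodic: every element has finite order. *)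

(* Defs.v *)
From mathcomp Require Import all_boot all_fingroup.
Set Implicit Arguments. Unset Strict Implicit. Unset Printing Implicit Defensive.

(* The free monoid X^* over an alphabet X = 'I_k, words are [:: x1; ...; xn]
   read from the root (x1 is the first-level letter).  Tree maps act on the
   right: u.g is written  g u , and the product g*h (first g then h) is h \o g. *)

Section Tree.
Variable k : nat.
Local Notation W := (seq 'I_k).

Definition is_aut (g : W -> W) : Prop :=
  [/\ bijective g, g [::] = [::] &
      forall u x, exists y, g (rcons u x) = rcons (g u) y].

(* section g|_u, defined by (u ++ v).g = u.g ++ v.(g|_u) *)
Definition section (g : W -> W) (u : W) : W -> W :=
  fun v => drop (size u) (g (u ++ v)).

Definition rooted (s : {perm 'I_k}) : W -> W :=
  fun w => match w with [::] => [::] | x :: w' => s x :: w' end.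

Inductive gen (T : (W -> W) -> Prop) : (W -> W) -> Prop :=
| gen1 : gen T (fun u => u)
| genM : forall g s, gen T g -> T s -> gen T (s \o g)
| genV : forall g s t, gen T g -> T s -> cancel s t -> cancel t s ->
    gen T (t \o g).

Definition ingen (T : (W -> W) -> Prop) (f : W -> W) : Prop :=
  exists g, gen T g /\ f =1 g.

Definition in_Sym (f : W -> W) : Prop := exists s : {perm 'I_k}, f =1 rooted s.

Definition in_St1 (f : W -> W) : Prop := forall x : 'I_k, f [:: x] = [:: x].

Definition periodic (G : (W -> W) -> Prop) : Prop :=
  forall g, G g -> exists n, 0 < n /\ forall u, iter n g u = u.
End Tree.

(* a_m = (0 1 ... m-1), a_2 = (0 1), for m = n.+3 *)
Definition a_m (n : nat) : {perm 'I_n.+3} := perm (@ordS_inj n.+3).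
Definition a_2 (n : nat) : {perm 'I_n.+3} := tperm ord0 (inord 1).

(* Main.v *)
Require Import Defs.
From mathcomp Require Import all_boot all_fingroup zify.
From Stdlib Require Import Classical.
Set Implicit Arguments. Unset Strict Implicit. Unset Printing Implicit Defensive.

Section Core.
Variable k : nat.
Local Notation W := (seq 'I_k.+1).

Lemma rooted1 (v : W) : rooted 1 v = v.
Proof. by case: v => //= x w; rewrite perm1. Qed.

Lemma rootedM (p q : {perm 'I_k.+1}) (v : W) : rooted p (rooted q v) = rooted (q * p) v.
Proof. by case: v => //= x w; rewrite permM. Qed.

Lemma core (b : W -> W) (s : 'I_k.+1 -> {perm 'I_k.+1}) (t : {perm 'I_k.+1}) (l : seq 'I_k.+1) :
  (forall v, b (ord0 :: v) = ord0 :: b v) ->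
  (forall x v, x != ord0 -> b (x :: v) = x :: rooted (s x) v) ->
  0 < size l ->
  (forall j, j < size l -> iter j.+1 t ord0 = nth ord0 l j) ->
  iter (size l).+1 t ord0 = ord0 ->
  ord0 \notin l ->
  (\prod_(y <- l) s y)%g = t ->
  forall N, 0 < N -> ~ (forall u, iter N (fun u => rooted t (b u)) u = u).
Proof.
move=> Hb0 Hbx Hsz Hpath Hret Hnz Hprod.
set g := fun u => rooted t (b u).
have gx : forall x v, exists v', g (x :: v) = t x :: v'.
  move=> x v; rewrite /g; case: (x =P ord0) => [->|/eqP nx].
    by rewrite Hb0; eexists.
  by rewrite Hbx //; eexists.
have C1 : forall j, j <= size l -> forall w, iter j.+1 g (ord0 :: w) =
    iter j.+1 t ord0 :: rooted (\prod_(y <- take j l) s y)%g (b w).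
  elim=> [|j IH] Hj w.
    by rewrite /= take0 big_nil rooted1 /g Hb0.
  rewrite iterS IH ?(ltnW Hj) // Hpath //.
  have nz : nth ord0 l j != ord0.
    by apply/eqP=> E; move: Hnz; rewrite -E mem_nth.
  rewrite /g Hbx // /= rootedM (take_nth ord0 Hj) big_rcons /=.
  by rewrite -Hpath.
set K := (size l).+1.
have C2 : forall w, iter K g (ord0 :: w) = ord0 :: g w.
  by move=> w; rewrite C1 // take_size Hprod Hret.
have C3 : forall j x v, exists v', iter j g (x :: v) = iter j t x :: v'.
  elim=> [|j IH] x v; first by eexists.
  rewrite !iterS; have [v' ->] := IH x v.
  exact: gx.
have C4 : forall q w, iter (q * K) g (ord0 :: w) = ord0 :: iter q g w.
  elim=> [|q IH] w //; by rewrite mulSn iterD IH C2.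
have C5 : forall q, iter (q * K) t ord0 = ord0.
  elim=> [|q IH] //; by rewrite mulSn iterD IH Hret.
have C6 : forall r, 0 < r < K -> iter r t ord0 != ord0.
  case=> // j /andP [_ Hj]; rewrite Hpath //.
  by apply/eqP=> E; move: Hnz; rewrite -E mem_nth.
elim/ltn_ind=> N IH N0 H.
have HK : 1 < K by rewrite /K ltnS.
have [v' E] := C3 N ord0 [::].
have E0 : iter N t ord0 = ord0 by move: (H [:: ord0]); rewrite E => -[].
move: E0; rewrite (divn_eq N K) addnC iterD C5 => E0.
have r0 : N %% K = 0.
  case r0: (N %% K) => [|r] //.
  by have := C6 (N %% K); rewrite E0 eqxx ltn_pmod ?(ltnW HK) // r0 => /(_ isT).
have eN : N = N %/ K * K by rewrite {1}(divn_eq N K) r0 addn0.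
move: H; rewrite eN => H.
have q0 : 0 < N %/ K.
  by move: N0; rewrite {1}eN muln_gt0 => /andP [].
apply: (IH (N %/ K)) => //.
  by rewrite {2}eN ltn_Pmulr.
by move=> u; move: (H (ord0 :: u)); rewrite C4 => -[].
Qed.
End Core.

Section T2.
Variable n : nat.
Local Notation I := 'I_n.+3.
Local Notation W := (seq I).
Local Notation a := (a_m n).
Local Notation t := (a_2 n).

Lemma aut_size (b : W -> W) : is_aut b -> forall u, size (b u) = size u.
Proof.
case=> _ b0 Hr; elim/last_ind=> [|u x IH]; first by rewrite b0.
by have [y ->] := Hr u x; rewrite !size_rcons IH.
Qed.

Lemma aut_pref (b : W -> W) : is_aut b -> forall x v, exists v', b (x :: v) = b [:: x] ++ v'.
Proof.
move=> Hb x; elim/last_ind=> [|v y [v' IH]]; first by exists [::]; rewrite cats0.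
case: Hb => _ _ Hr; have [z E] := Hr (x :: v) y.
by exists (rcons v' z); rewrite -rcons_cons E IH rcons_cat.
Qed.

Lemma act_st (b : W -> W) : is_aut b -> in_St1 b -> forall x v, b (x :: v) = x :: section b [:: x] v.
Proof.
move=> Ha Hs x v; have [v' E] := aut_pref Ha x v.
by rewrite /section /= E Hs /= drop0.
Qed.

Lemma aval (x : I) : nat_of_ord (a x) = if nat_of_ord x == n.+2 then 0 else (nat_of_ord x).+1.
Proof.
rewrite /a_m permE /=; case: x => x /= Hx.
case: eqP => [->|ne]; first by rewrite modnn.
by rewrite modn_small //; lia.
Qed.

Lemma tval (y : I) : nat_of_ord (t y) = if nat_of_ord y == 0 then 1 else if nat_of_ord y == 1 then 0 else nat_of_ord y.
Proof.
rewrite /a_2; have h1 : val (inord 1 : I) = 1 by rewrite /= inordK.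
case: (y =P ord0) => [->|/eqP n0]; first by rewrite tpermL h1.
case: (y =P inord 1) => [->|/eqP n1]; first by rewrite tpermR h1.
rewrite tpermD 1?eq_sym //.
case: eqP => [e|_]; first by move: n0; rewrite -val_eqE /= e eqxx.
case: eqP => [e|_] //; by move: n1; rewrite -val_eqE h1 /= e eqxx.
Qed.

Lemma tvalg (y : I) v : nat_of_ord y = v -> nat_of_ord (t y) = if v == 0 then 1 else if v == 1 then 0 else v.
Proof. by move=> <-; rewrite tval. Qed.
Lemma avalg (y : I) v : nat_of_ord y = v -> nat_of_ord (a y) = if v == n.+2 then 0 else v.+1.
Proof. by move=> <-; rewrite aval. Qed.

Lemma iter_a j : nat_of_ord (iter j a ord0) = j %% n.+3.
Proof.
elim: j => [|j IH] /=; first by rewrite mod0n.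
have E : j.+1 %% n.+3 = (j %% n.+3).+1 %% n.+3.
  by rewrite -[j.+1]addn1 -[(j %% _).+1]addn1 modnDml.
rewrite aval IH E; have := ltn_pmod j (ltn0Sn n.+2); move: (j %% n.+3) => r ltat.
case: eqP => [->|ne]; first by rewrite modnn.
rewrite modn_small //; lia.
Qed.

Definition la : seq I := [seq inord i | i <- iota 1 n.+2].

Lemma la_size : size la = n.+2.
Proof. by rewrite size_map size_iota. Qed.

Lemma la_path j : j < size la -> iter j.+1 a ord0 = nth ord0 la j.
Proof.
rewrite la_size => Hj; apply: val_inj; change (nat_of_ord (iter j.+1 a ord0) = nat_of_ord (nth ord0 la j)); rewrite iter_a (nth_map 0) ?size_iota //.
rewrite modn_small; last lia. by rewrite nth_iota // /= inordK //; lia.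
Qed.

Lemma la_ret : iter (size la).+1 a ord0 = ord0.
Proof. by apply: val_inj; change (nat_of_ord (iter (size la).+1 a ord0) = 0); rewrite iter_a la_size modnn. Qed.

Lemma la_nz : ord0 \notin la.
Proof.
apply/mapP => -[i]; rewrite mem_iota => Hi /(congr1 val); rewrite /= inordK; lia.
Qed.

Lemma sum_ind x s len : \sum_(i <- iota s len) (i == x : nat) = (s <= x < s + len).
Proof.
elim: len s => [|len IH] s; first by rewrite big_nil addn0; case: leqP => //; lia.
rewrite /= big_cons IH; case: (ltngtP s x) => h /=.
- rewrite add0n; congr (nat_of_bool (_ < _)); lia.
- by [].
- by subst; rewrite addnS ltnS leq_addr.
Qed.

Lemma prodpow (T : eqType) (r : seq T) (p : {perm I}) F :
  (\prod_(i <- r) (p ^+ F i))%g = (p ^+ (\sum_(i <- r) F i))%g.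
Proof.
elim: r => [|x r IH]; first by rewrite !big_nil.
by rewrite !big_cons IH expgD.
Qed.

Lemma prod_split (s : I -> {perm I}) (x1 : I) pp f st :
  0 < st -> st <= x1 -> s x1 = pp ->
  (forall y : I, y != ord0 -> y != x1 -> s y = (t ^+ f (val y))%g) ->
  (\prod_(y <- [seq inord i | i <- iota st (n.+3 - st)] : seq I) s y)%g =
  (t ^+ (\sum_(i <- iota st (x1 - st)) f i) * pp *
   t ^+ (\sum_(i <- iota x1.+1 (n.+2 - x1)) f i))%g.
Proof.
move=> s0 sx Hx Hy.
have x1lt := ltn_ord x1.
rewrite (_ : n.+3 - st = (x1 - st) + (n.+2 - x1).+1); last by lia.
rewrite iotaD subnKC //= map_cat big_cat /= big_cons inord_val Hx mulgA.
rewrite !big_map -!prodpow; congr (_ * _ * _)%g; apply: eq_big_seq => i;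
  rewrite mem_iota => Hi; (rewrite Hy; [by rewrite /= inordK //; lia | |]);
  apply/eqP => /(congr1 val); rewrite /= inordK; lia.
Qed.

Definition tat : {perm I} := (t * a * t)%g.

Lemma tatv (y : I) : nat_of_ord (tat y) = nat_of_ord (t (a (t y))).
Proof. by rewrite /tat !permM. Qed.

Lemma iter_tat j : j <= n -> nat_of_ord (iter j.+1 tat ord0) = j.+2.
Proof.
elim: j => [|j IH] Hj.
  have h0 : nat_of_ord (ord0 : I) = 0 by [].
  by rewrite /= tatv (tvalg (avalg (tvalg h0))).
rewrite iterS tatv (tvalg (avalg (tvalg (IH (ltnW Hj))))) /=.
have -> : (j.+2 == n.+2) = false by apply/eqP; lia.
by [].
Qed.

Definition ltat : seq I := [seq inord i | i <- iota 2 n.+1] ++ [:: inord 1].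

Lemma ltat_size : size ltat = n.+2.
Proof. by rewrite size_cat size_map size_iota addn1. Qed.

Lemma ltat_path j : j < size ltat -> iter j.+1 tat ord0 = nth ord0 ltat j.
Proof.
rewrite ltat_size => Hj; apply: val_inj.
change (nat_of_ord (iter j.+1 tat ord0) = nat_of_ord (nth ord0 ltat j)).
rewrite nth_cat size_map size_iota.
case: ltnP => h.
  rewrite iter_tat; last lia.
  rewrite (nth_map 0) ?size_iota // nth_iota // inordK //; lia.
have -> : j = n.+1 by lia.
rewrite subnn /= inordK // tatv (tvalg (avalg (tvalg (iter_tat (leqnn n))))) /=.
by rewrite eqxx.
Qed.

Lemma ltat_ret : iter (size ltat).+1 tat ord0 = ord0.
Proof.
apply: val_inj; rewrite ltat_size iterS.
have -> : iter n.+2 tat ord0 = inord 1.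
  have := ltat_path (j := n.+1); rewrite ltat_size nth_cat size_map size_iota ltnn subnn /=.
  by move=> ->.
change (nat_of_ord (tat (inord 1)) = 0).
have h1 : nat_of_ord (inord 1 : I) = 1 by rewrite inordK.
by rewrite tatv (tvalg (avalg (tvalg h1))).
Qed.

Lemma ltat_nz : ord0 \notin ltat.
Proof.
rewrite mem_cat negb_or mem_seq1; apply/andP; split.
  apply/negP; case/mapP => i; rewrite mem_iota => Hi /(congr1 val); rewrite /= inordK; lia.
by apply/eqP => /(congr1 val); rewrite /= inordK.
Qed.
End T2.

Section Fin.
Variable n : nat.
Local Notation I := 'I_n.+3.
Local Notation W := (seq I).
Local Notation a := (a_m n).
Local Notation t := (a_2 n).
Variable S : (W -> W) -> Prop.
Local Notation G := (ingen (fun f => in_Sym f \/ ingen S f)).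

Lemma gen_mono (T1 T2 : (W -> W) -> Prop) : (forall s, T1 s -> T2 s) ->
  forall g, Defs.gen T1 g -> Defs.gen T2 g.
Proof.
move=> H g; elim=> [|g' s _ IH Hs|g' s t' _ IH Hs c1 c2].
- exact: Defs.gen1.
- exact: Defs.genM IH (H _ Hs).
- exact: (Defs.genV IH (H _ Hs) c1 c2).
Qed.

Lemma S_ingen s : S s -> ingen S s.
Proof. move=> Hs; exists (s \o (fun u => u)); split => //; exact: Defs.genM (Defs.gen1 _) Hs. Qed.

Lemma S_ingen2 s1 s2 : S s1 -> S s2 -> ingen S (s1 \o s2).
Proof.
move=> H1 H2; exists (s1 \o (s2 \o (fun u => u))); split => //.
exact: Defs.genM (Defs.genM (Defs.gen1 _) H2) H1.
Qed.

Lemma finish (b : W -> W) (s : I -> {perm I}) (tau : {perm I}) (l : seq I) :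
  ingen S b ->
  (forall v, b (ord0 :: v) = ord0 :: b v) ->
  (forall x v, x != ord0 -> b (x :: v) = x :: rooted (s x) v) ->
  0 < size l ->
  (forall j, j < size l -> iter j.+1 tau ord0 = nth ord0 l j) ->
  iter (size l).+1 tau ord0 = ord0 ->
  ord0 \notin l ->
  (\prod_(y <- l) s y)%g = tau ->
  ~ periodic G.
Proof.
move=> [b' [Gb Eb]] Hb0 Hbx Hsz Hp Hr Hnz Hpr Hper.
have [N [N0 HN]] := Hper (fun u => rooted tau (b u)) (ex_intro _ (rooted tau \o b') (conj
  (Defs.genM (gen_mono (fun s Hs => or_intror (S_ingen Hs)) Gb) (or_introl (ex_intro _ tau (fun _ => erefl))))
  (fun u => congr1 (rooted tau) (Eb u)))).
exact: (@core n.+2 b s tau l Hb0 Hbx Hsz Hp Hr Hnz Hpr N N0 HN).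
Qed.

Lemma sum0 (r : seq nat) : \sum_(i <- r) 0 = 0.
Proof. by rewrite big1. Qed.

Lemma finA (b : W -> W) (s : I -> {perm I}) (x1 : I) p f :
  ingen S b ->
  (forall v, b (ord0 :: v) = ord0 :: b v) ->
  (forall x v, x != ord0 -> b (x :: v) = x :: rooted (s x) v) ->
  x1 != ord0 -> s x1 = p ->
  (forall y : I, y != ord0 -> y != x1 -> s y = (t ^+ f (nat_of_ord y))%g) ->
  (t ^+ (\sum_(i <- iota 1 (x1 - 1)) f i) * p *
   t ^+ (\sum_(i <- iota x1.+1 (n.+2 - x1)) f i))%g = a ->
  ~ periodic G.
Proof.
move=> Hb Hb0 Hbx nx1 Hx Hy Hp.
apply: (finish Hb Hb0 Hbx (l := la n)).
- by rewrite la_size.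
- exact: la_path.
- exact: la_ret.
- exact: la_nz.
have -> : la n = [seq inord i | i <- iota 1 (n.+3 - 1)] :> seq I by [].
rewrite (prod_split (x1 := x1) (pp := p) (f := f) (st := 1)) //.
by rewrite lt0n.
Qed.

Lemma finT (b : W -> W) (s : I -> {perm I}) (x1 : I) p f :
  ingen S b ->
  (forall v, b (ord0 :: v) = ord0 :: b v) ->
  (forall x v, x != ord0 -> b (x :: v) = x :: rooted (s x) v) ->
  2 <= x1 -> s x1 = p -> s (inord 1) = 1%g ->
  (forall y : I, y != ord0 -> y != x1 -> s y = (t ^+ f (nat_of_ord y))%g) ->
  (t ^+ (\sum_(i <- iota 2 (x1 - 2)) f i) * p *
   t ^+ (\sum_(i <- iota x1.+1 (n.+2 - x1)) f i))%g = tat n ->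
  ~ periodic G.
Proof.
move=> Hb Hb0 Hbx nx1 Hx H1 Hy Hp.
apply: (finish Hb Hb0 Hbx (l := ltat n)).
- by rewrite ltat_size.
- exact: ltat_path.
- exact: ltat_ret.
- exact: ltat_nz.
have -> : ltat n = [seq inord i | i <- iota 2 (n.+3 - 2)] ++ [:: inord 1] :> seq I by [].
rewrite big_cat big_seq1 H1 Monoid.mulm1.
rewrite (prod_split (x1 := x1) (pp := p) (f := f) (st := 2)) //.
Qed.

Lemma finS (b : W -> W) (s : I -> {perm I}) :
  ingen S b ->
  (forall v, b (ord0 :: v) = ord0 :: b v) ->
  (forall x v, x != ord0 -> b (x :: v) = x :: rooted (s x) v) ->
  s (inord 1) = t ->
  ~ periodic G.
Proof.
move=> Hb Hb0 Hbx H1.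
apply: (finish Hb Hb0 Hbx (tau := t) (l := [:: inord 1])) => //.
- by case=> // _; rewrite /= /a_2 tpermL.
- by rewrite /= /a_2 tpermL tpermR.
- rewrite mem_seq1; apply/eqP => /(congr1 val); by rewrite /= inordK.
- by rewrite big_seq1.
Qed.
End Fin.

Section D.
Variable n : nat.
Local Notation I := 'I_n.+3.
Local Notation W := (seq I).
Local Notation a := (a_m n).
Local Notation t := (a_2 n).
Variable S : (W -> W) -> Prop.
Local Notation G := (ingen (fun f => in_Sym f \/ ingen S f)).

Lemma t2 : (t ^+ 2 = 1)%g.
Proof. by rewrite expgS expg1 /a_2 tperm2. Qed.

Lemma sumf2 (x2 x3 : nat) st len :
  \sum_(i <- iota st len) ((i == x2) + (i == x3)) = (st <= x2 < st + len) + (st <= x3 < st + len).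
Proof. by rewrite big_split /= !sum_ind. Qed.

Lemma caseD (b : W -> W) (s : I -> {perm I}) (x1 x2 x3 : I) :
  ingen S b ->
  (forall v, b (ord0 :: v) = ord0 :: b v) ->
  (forall x v, x != ord0 -> b (x :: v) = x :: rooted (s x) v) ->
  x1 != ord0 -> x2 != ord0 -> x3 != ord0 -> x1 != x2 -> x1 != x3 -> x2 != x3 ->
  s x1 = a ->
  (forall y : I, y != ord0 -> y != x1 ->
     s y = (t ^+ ((nat_of_ord y == x2) + (nat_of_ord y == x3)))%g) ->
  ~ periodic G.
Proof.
move=> Hb Hb0 Hbx n1 n2 n3 d12 d13 d23 Hx Hy.
have v1 : 0 < x1 by rewrite lt0n.
have v2 : 0 < x2 by rewrite lt0n.
have v3 : 0 < x3 by rewrite lt0n.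
have w12 : nat_of_ord x1 <> x2 by move=> e; move: d12; rewrite -val_eqE /= e eqxx.
have w13 : nat_of_ord x1 <> x3 by move=> e; move: d13; rewrite -val_eqE /= e eqxx.
have w23 : nat_of_ord x2 <> x3 by move=> e; move: d23; rewrite -val_eqE /= e eqxx.
have l1 := ltn_ord x1; have l2 := ltn_ord x2; have l3 := ltn_ord x3.
case: (boolP ((x1 < x2) && (x1 < x3))) => [/andP [h2 h3]|h].
  apply: (finA (f := fun i => (i == x2) + (i == x3)) Hb Hb0 Hbx n1 Hx Hy).
  rewrite !sumf2.
  have -> : (1 <= x2 < 1 + (x1 - 1)) + (1 <= x3 < 1 + (x1 - 1)) = 0 by lia.
  have -> : (x1.+1 <= x2 < x1.+1 + (n.+2 - x1)) + (x1.+1 <= x3 < x1.+1 + (n.+2 - x1)) = 2 by lia.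
  by rewrite t2 expg0 mul1g mulg1.
case: (boolP ((x2 < x1) && (x3 < x1))) => [/andP [h2 h3]|h'].
  apply: (finA (f := fun i => (i == x2) + (i == x3)) Hb Hb0 Hbx n1 Hx Hy).
  rewrite !sumf2.
  have -> : (1 <= x2 < 1 + (x1 - 1)) + (1 <= x3 < 1 + (x1 - 1)) = 2 by lia.
  have -> : (x1.+1 <= x2 < x1.+1 + (n.+2 - x1)) + (x1.+1 <= x3 < x1.+1 + (n.+2 - x1)) = 0 by lia.
  by rewrite t2 expg0 mul1g mulg1.
have i1 : nat_of_ord (inord 1 : I) = 1 by rewrite inordK.
have ni1 : (inord 1 : I) != ord0 by rewrite -val_eqE /= i1.
case: (x2 =P 1 :> nat) => [e2|ne2].
  apply: (finS Hb Hb0 Hbx).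
  rewrite Hy //; last by apply/eqP => e; apply: w12; rewrite -e i1 e2.
  rewrite i1 e2 eqxx.
  have -> : (1 == x3) = false by apply/eqP; lia.
  by rewrite expg1.
case: (x3 =P 1 :> nat) => [e3|ne3].
  apply: (finS Hb Hb0 Hbx).
  rewrite Hy //; last by apply/eqP => e; apply: w13; rewrite -e i1 e3.
  rewrite i1 e3 eqxx.
  have -> : (1 == x2) = false by apply/eqP; lia.
  by rewrite expg1.
apply: (finT (f := fun i => (i == x2) + (i == x3)) Hb Hb0 Hbx _ Hx).
- move: h h'; rewrite !negb_and -!leqNgt; lia.
- rewrite Hy // ?i1; last by apply/eqP => e; move: h h'; rewrite -e i1 !negb_and -!leqNgt; lia.
  have -> : (1 == x2) = false by apply/eqP; lia.
  have -> : (1 == x3) = false by apply/eqP; lia.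
  by rewrite expg0.
- exact: Hy.
rewrite !sumf2.
have -> : (2 <= x2 < 2 + (x1 - 2)) + (2 <= x3 < 2 + (x1 - 2)) = 1.
  by move: h h'; rewrite !negb_and -!leqNgt; lia.
have -> : (x1.+1 <= x2 < x1.+1 + (n.+2 - x1)) + (x1.+1 <= x3 < x1.+1 + (n.+2 - x1)) = 1.
  by move: h h'; rewrite !negb_and -!leqNgt; lia.
by rewrite !expg1.
Qed.
End D.

Section E.
Variable n : nat.
Local Notation I := 'I_n.+3.
Local Notation W := (seq I).
Local Notation a := (a_m n).
Local Notation t := (a_2 n).
Variable S : (W -> W) -> Prop.
Local Notation G := (ingen (fun f => in_Sym f \/ ingen S f)).

Lemma comp_act (bA bB : W -> W) sA sB :
  (forall v, bA (ord0 :: v) = ord0 :: bA v) ->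
  (forall x v, x != ord0 -> bA (x :: v) = x :: rooted (sA x) v) ->
  (forall v, bB (ord0 :: v) = ord0 :: bB v) ->
  (forall x v, x != ord0 -> bB (x :: v) = x :: rooted (sB x) v) ->
  (forall v, (bA \o bB) (ord0 :: v) = ord0 :: (bA \o bB) v) /\
  (forall x v, x != ord0 -> (bA \o bB) (x :: v) = x :: rooted (sB x * sA x)%g v).
Proof.
move=> A0 Ax B0 Bx; split => [v|x v nx] /=; first by rewrite B0 A0.
by rewrite Bx // Ax // rootedM.
Qed.

Lemma neqnat (x y : I) : x != y -> (nat_of_ord x == y) = false.
Proof. by move=> ne; apply/eqP => e; move: ne; rewrite -val_eqE /= e eqxx. Qed.

Lemma caseC1 (b1 : W -> W) (x1 : I) :
  ingen S b1 ->
  (forall v, b1 (ord0 :: v) = ord0 :: b1 v) ->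
  (forall y v, y != ord0 -> b1 (y :: v) = y :: rooted (if y == x1 then a else 1%g) v) ->
  x1 != ord0 -> ~ periodic G.
Proof.
move=> Hb Hb0 Hbx nx1.
apply: (finA (f := fun _ => 0) Hb Hb0 Hbx nx1 (p := a)); first by rewrite eqxx.
  by move=> y _ ny; rewrite (negbTE ny) expg0.
by rewrite !big1 // expg0 mul1g mulg1.
Qed.

Lemma caseC2 (b1 b3 : W -> W) (x1 x2 x3 : I) :
  S b1 -> S b3 ->
  (forall v, b1 (ord0 :: v) = ord0 :: b1 v) ->
  (forall y v, y != ord0 -> b1 (y :: v) =
     y :: rooted (if y == x1 then a else if y == x2 then t else 1%g) v) ->
  (forall v, b3 (ord0 :: v) = ord0 :: b3 v) ->
  (forall y v, y != ord0 -> b3 (y :: v) = y :: rooted (if y == x3 then t else 1%g) v) ->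
  x1 != ord0 -> x2 != ord0 -> x3 != ord0 -> x1 != x2 -> ~ periodic G.
Proof.
move=> S1 S3 A0 Ax B0 Bx n1 n2 n3 d12.
have l1 := ltn_ord x1; have l2 := ltn_ord x2.
have w12 : nat_of_ord x1 <> x2 by move=> e; move: d12; rewrite -val_eqE /= e eqxx.
case: (x3 =P x2) => [e32|ne32].
  have [C0 Cx] := comp_act B0 Bx A0 Ax.
  apply: (finA (f := fun _ => 0) (S_ingen2 S3 S1) C0 Cx n1 (p := a)).
  - by rewrite eqxx e32 (negbTE d12) mulg1.
  - move=> y _ ny; rewrite (negbTE ny) expg0 e32.
    by case: (y == x2); rewrite ?tperm2 ?mulg1.
  by rewrite !big1 // expg0 mul1g mulg1.
case: (x3 =P x1) => [e31|ne31].
  case: (ltnP x1 x2) => h.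
    have [C0 Cx] := comp_act B0 Bx A0 Ax.
    apply: (finA (f := fun i => (i == x2) : nat) (S_ingen2 S3 S1) C0 Cx n1 (p := (a * t)%g)).
    - by rewrite eqxx e31 eqxx.
    - move=> y _ ny; rewrite (negbTE ny) e31 (negbTE ny) mulg1.
      case: (y =P x2) => [->|ne]; first by rewrite eqxx expg1.
      by rewrite (neqnat (introN eqP ne)) expg0.
    rewrite !sum_ind.
    have -> : (1 <= x2 < 1 + (x1 - 1)) = false by apply/negP => /andP []; lia.
    have -> : (x1.+1 <= x2 < x1.+1 + (n.+2 - x1)) = true by apply/andP; split; lia.
    by rewrite expg0 expg1 mul1g -mulgA /a_2 tperm2 mulg1.
  have [C0 Cx] := comp_act A0 Ax B0 Bx.
  apply: (finA (f := fun i => (i == x2) : nat) (S_ingen2 S1 S3) C0 Cx n1 (p := (t * a)%g)).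
  - by rewrite eqxx e31 eqxx.
  - move=> y _ ny; rewrite (negbTE ny) e31 (negbTE ny) mul1g.
    case: (y =P x2) => [->|ne]; first by rewrite eqxx expg1.
    by rewrite (neqnat (introN eqP ne)) expg0.
  rewrite !sum_ind.
  have -> : (1 <= x2 < 1 + (x1 - 1)) = true by apply/andP; split; rewrite ?lt0n //; lia.
  have -> : (x1.+1 <= x2 < x1.+1 + (n.+2 - x1)) = false by apply/negP => /andP []; lia.
  by rewrite expg0 expg1 mulg1 mulgA /a_2 tperm2 mul1g.
have [C0 Cx] := comp_act A0 Ax B0 Bx.
apply: (caseD (S_ingen2 S1 S3) C0 Cx n1 n2 n3 d12 _ _ (x3 := x3)).
- by apply/eqP => e; apply: ne31.
- by apply/eqP => e; apply: ne32.
- have d13 : x1 != x3 by apply/eqP => e; apply: ne31; rewrite e.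
  by rewrite eqxx (negbTE d13) mul1g.
move=> y _ ny; rewrite (negbTE ny).
case: (y =P x2) => [->|ne2].
  rewrite eqxx; case: (x2 =P x3) => [e|_]; first by case: ne32.
  by rewrite (neqnat (introN eqP (fun e => ne32 (esym e)))) mul1g expg1.
case: (y =P x3) => [->|ne3].
  by rewrite eqxx (neqnat (introN eqP ne32)) mulg1 expg1.
by rewrite (neqnat (introN eqP ne2)) (neqnat (introN eqP ne3)) mulg1 expg0.
Qed.

Lemma caseC4 (b1 : W -> W) (x1 x2 x3 : I) :
  ingen S b1 ->
  (forall v, b1 (ord0 :: v) = ord0 :: b1 v) ->
  (forall y v, y != ord0 -> b1 (y :: v) =
     y :: rooted (if y == x1 then a else if y == x2 then t else if y == x3 then t else 1%g) v) ->
  x1 != ord0 -> x2 != ord0 -> x3 != ord0 -> x1 != x2 -> x1 != x3 -> x2 != x3 -> ~ periodic G.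
Proof.
move=> Hb A0 Ax n1 n2 n3 d12 d13 d23.
apply: (caseD Hb A0 Ax n1 n2 n3 d12 d13 d23); first by rewrite eqxx.
move=> y _ ny; rewrite (negbTE ny).
case: (y =P x2) => [->|ne2].
  by rewrite eqxx (neqnat d23) expg1.
case: (y =P x3) => [->|ne3].
  by rewrite eqxx (neqnat (introN eqP (fun e => (negP d23) (introT eqP (esym e))))) expg1.
by rewrite (neqnat (introN eqP ne2)) (neqnat (introN eqP ne3)) expg0.
Qed.
End E.
Unset Implicit Arguments.

Theorem mainTheorem18 (n : nat)
  (S : (seq 'I_n.+3 -> seq 'I_n.+3) -> Prop)
  (HSaut : forall s, S s -> is_aut s)
  (HBst : forall b, ingen S b -> in_St1 b)
  (HB0 : forall b, ingen S b -> section b [:: ord0] =1 b)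
  (HBx : forall b x, ingen S b -> x != ord0 -> in_Sym (section b [:: x]))
  (HBgen : forall f, in_Sym f ->
     ingen (fun h => exists b x, [/\ ingen S b, x != ord0 & h =1 section b [:: x]]) f)
  (Ham : exists b1 x1, [/\ S b1, x1 != ord0 &
     forall b x, S b -> x != ord0 ->
       (section b [:: x] =1 rooted (a_m n) <-> (b, x) = (b1, x1))])
  (Ha2 : exists b2 x2 b3 x3, [/\ S b2 /\ x2 != ord0, S b3 /\ x3 != ord0,
     (b2, x2) <> (b3, x3) &
     forall b x, S b -> x != ord0 ->
       (section b [:: x] =1 rooted (a_2 n) <-> ((b, x) = (b2, x2) \/ (b, x) = (b3, x3)))])
  (Htriv : forall b x, S b -> x != ord0 ->
     ~ (section b [:: x] =1 rooted (a_m n)) ->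
     ~ (section b [:: x] =1 rooted (a_2 n)) ->
     section b [:: x] =1 (fun u => u)) :
  ~ periodic (ingen (fun f => in_Sym f \/ ingen S f)).
Proof.
case: Ham => b1 [x1 [S1 n1 Ham]].
case: Ha2 => b2 [x2 [b3 [x3 [[S2 n2] [S3 n3] n23 Ha2]]]].
have act0 : forall b, S b -> forall v, b (ord0 :: v) = ord0 :: b v.
  move=> b Sb v; rewrite (act_st (HSaut b Sb) (HBst b (S_ingen Sb))).
  by rewrite (HB0 b (S_ingen Sb)).
have mkact : forall b (s : 'I_n.+3 -> {perm 'I_n.+3}), S b ->
    (forall y, y != ord0 -> section b [:: y] =1 rooted (s y)) ->
    forall y v, y != ord0 -> b (y :: v) = y :: rooted (s y) v.
  move=> b s Sb H y v ny; rewrite (act_st (HSaut b Sb) (HBst b (S_ingen Sb))).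
  by rewrite H.
have secA : section b1 [:: x1] =1 rooted (a_m n) := proj2 (Ham b1 x1 S1 n1) erefl.
have secT2 : section b2 [:: x2] =1 rooted (a_2 n) := proj2 (Ha2 b2 x2 S2 n2) (or_introl erefl).
have secT3 : section b3 [:: x3] =1 rooted (a_2 n) := proj2 (Ha2 b3 x3 S3 n3) (or_intror erefl).
have sec1 : forall b x, S b -> x != ord0 -> (b, x) <> (b1, x1) -> (b, x) <> (b2, x2) ->
    (b, x) <> (b3, x3) -> section b [:: x] =1 rooted 1.
  move=> b x Sb nx h1 h2 h3 u; rewrite rooted1.
  apply: (Htriv b x Sb nx) => [H|H].
    exact: h1 (proj1 (Ham b x Sb nx) H).
  by case: (proj1 (Ha2 b x Sb nx) H).
have i1 : nat_of_ord (inord 1 : 'I_n.+3) = 1 by rewrite inordK.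
have at_ne : ~ (rooted (a_m n) =1 rooted (a_2 n)).
  move=> H; move: (H [:: inord 1]) => /= [] /(congr1 (@nat_of_ord _)).
  by rewrite (avalg i1) (tvalg i1).
have d12p : (b1, x1) <> (b2, x2).
  move=> [e1 e2]; apply: at_ne => u; rewrite -secA e1 e2; exact: secT2.
have d13p : (b1, x1) <> (b3, x3).
  move=> [e1 e2]; apply: at_ne => u; rewrite -secA e1 e2; exact: secT3.
have nxx : forall (b b' : seq 'I_n.+3 -> seq 'I_n.+3) (y x : 'I_n.+3), y <> x -> (b, y) <> (b', x).
  by move=> b b' y x ne [_ e].
have nbb : forall (b b' : seq 'I_n.+3 -> seq 'I_n.+3) (y x : 'I_n.+3), b <> b' -> (b, y) <> (b', x).
  by move=> b b' y x ne [e _].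
case: (classic (b1 = b2)) => e12; case: (classic (b1 = b3)) => e13.
-
  subst b2 b3.
  have ne12 : x1 != x2 by apply/eqP => e; apply: d12p; rewrite e.
  have ne13 : x1 != x3 by apply/eqP => e; apply: d13p; rewrite e.
  have ne23 : x2 != x3 by apply/eqP => e; apply: n23; rewrite e.
  refine (caseC4 (S_ingen S1) (act0 _ S1) _ n1 n2 n3 ne12 ne13 ne23).
  eapply (mkact _ _ S1) => y ny.
  case: (y =P x1) => [->|h1]; first exact: secA.
  case: (y =P x2) => [->|h2]; first exact: secT2.
  case: (y =P x3) => [->|h3]; first exact: secT3.
  by apply: sec1 => //; apply: nxx.
- subst b2.
  have ne12 : x1 != x2 by apply/eqP => e; apply: d12p; rewrite e.
  refine (caseC2 S1 S3 (act0 _ S1) _ (act0 _ S3) _ n1 n2 n3 ne12).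
    eapply (mkact _ _ S1) => y ny.
    case: (y =P x1) => [->|h1]; first exact: secA.
    case: (y =P x2) => [->|h2]; first exact: secT2.
    by apply: sec1 => //; solve [apply: nxx => // | apply: nbb => //; congruence].
  eapply (mkact _ _ S3) => y ny.
  case: (y =P x3) => [->|h3]; first exact: secT3.
  by apply: sec1 => //; solve [apply: nxx => // | apply: nbb => //; congruence].
- subst b3.
  have ne13 : x1 != x3 by apply/eqP => e; apply: d13p; rewrite e.
  refine (caseC2 S1 S2 (act0 _ S1) _ (act0 _ S2) _ n1 n3 n2 ne13).
    eapply (mkact _ _ S1) => y ny.
    case: (y =P x1) => [->|h1]; first exact: secA.
    case: (y =P x3) => [->|h3]; first exact: secT3.
    by apply: sec1 => //; solve [apply: nxx => // | apply: nbb => //; congruence].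
  eapply (mkact _ _ S2) => y ny.
  case: (y =P x2) => [->|h2]; first exact: secT2.
  by apply: sec1 => //; solve [apply: nxx => // | apply: nbb => //; congruence].
- refine (caseC1 (S_ingen S1) (act0 _ S1) _ n1).
  eapply (mkact _ _ S1) => y ny.
  case: (y =P x1) => [->|h1]; first exact: secA.
  by apply: sec1 => //; solve [apply: nxx => // | apply: nbb => //; congruence].
Qed.
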